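(* Let $\Gamma$ be a distance-regular graph with diameter $D\ge 4$ and valency $k$. Assume $a_1=0$ and there exists $i$ with $2\le i\le D-2$ such that $a_i\neq 0$. Then (i) for every $\theta\in\mathbb{R}$ the pair $\theta,k$ is tight; and (ii) $\Gamma$ has no further tight pairs, i.e. if $\theta,\theta'\in\mathbb{R}$ form a tight pair then $\theta=k$ or $\theta'=k$.
   Context: $\Gamma$ is a finite connected undirected graph without loops or multiple edges, distance-regular with diameter $D$, intersection numbers $a_i,b_i,c_i$ ($c_0=0$, $b_D=0$), valency $k=b_0$, $c_i+a_i+b_i=k$. For $\theta\in\mathbb{R}$, the pseudo cosine sequence for $\theta$ is the sequence of reals $\sigma_0,\dots,\sigma_D$ with $\sigma_0=1$ and $c_i\sigma_{i-1}+a_i\sigma_i+b_i\sigma_{i+1}=\theta\sigma_i$ for $0\le i\le D-1$. Two pseudo cosine sequences $\sigma_i$, $\rho_i$ form a tight pair if $(\sigma_i\rho_i)_{i=0}^D$ is a pseudo cosine sequence; reals $\theta,\theta'$ form a tight pair if their pseudo cosine sequences do. *)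

(* Defs.v *)
From HB Require Import structures.
From mathcomp Require Import all_boot all_order all_algebra.
From mathcomp Require Import reals.
Set Implicit Arguments. Unset Strict Implicit. Unset Printing Implicit Defensive.
Import Order.TTheory GRing.Theory Num.Theory.

Section Graph.
Variable T : finType.
Variable e : rel T.

Definition nbhd (A : {set T}) : {set T} := A :|: [set y | [exists x in A, e x y]].

Definition gball (x : T) (n : nat) : {set T} := iter n nbhd [set x].

(* graph distance: least n with y in gball x n (n ranges over 0..#|T|-1,
   which suffices in a connected graph) *)
Definition gdist (x y : T) : nat := find (fun n => y \in gball x n) (iota 0 #|T|).

Definition distance_regular (D : nat) (a b c : nat -> nat) : Prop :=
  [/\ symmetric e, irreflexive e,
      (forall x y : T, exists n, y \in gball x n),
      (forall x y : T, gdist x y <= D)%N /\ (exists x y : T, gdist x y = D) &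
      forall x y : T,
        [/\ #|[set z | e y z & (gdist x z).+1 == gdist x y]| = c (gdist x y),
            #|[set z | e y z & gdist x z == gdist x y]| = a (gdist x y) &
            #|[set z | e y z & gdist x z == (gdist x y).+1]| = b (gdist x y)]].
End Graph.

Local Open Scope ring_scope.

Definition pseudo_cosine (R : realType) (D : nat) (a b c : nat -> nat)
    (theta : R) (s : nat -> R) : Prop :=
  s 0%N = 1 /\
  forall i : nat, (i < D)%N ->
    (c i)%:R * s i.-1 + (a i)%:R * s i + (b i)%:R * s i.+1 = theta * s i.

Definition tight_pair (R : realType) (D : nat) (a b c : nat -> nat)
    (theta theta' : R) : Prop :=
  exists (s r : nat -> R) (eta : R),
    [/\ pseudo_cosine D a b c theta s, pseudo_cosine D a b c theta' r &
        pseudo_cosine D a b c eta (fun i => s i * r i)].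

(* Main.v *)
Require Import Defs.
From HB Require Import structures.
From mathcomp Require Import all_boot all_order all_algebra.
From mathcomp Require Import reals.
From mathcomp Require Import zify.
From mathcomp.algebra_tactics Require Import ring lra.
Set Implicit Arguments. Unset Strict Implicit. Unset Printing Implicit Defensive.

Section G.
Variable T : finType.
Variable e : rel T.
Hypothesis sym : symmetric e.
Hypothesis conn : forall x y : T, exists n, y \in gball e x n.

Lemma gballS x n : gball e x n.+1 = nbhd e (gball e x n).
Proof. by []. Qed.

Lemma in_nbhd A y : (y \in nbhd e A) = (y \in A) || [exists x in A, e x y].
Proof. by rewrite /nbhd !inE. Qed.

Lemma gball_mono x m n : (m <= n)%N -> gball e x m \subset gball e x n.
Proof.
move=> /subnKC <-; elim: (n - m)%N => [|d IH]; first by rewrite addn0.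
rewrite addnS gballS; apply: subset_trans IH _; exact: subsetUl.
Qed.

Lemma gball_count x n : (n < #|gball e x n|)%N \/ gball e x n.+1 = gball e x n.
Proof.
elim: n => [|n [IH|IH]].
- left; by rewrite /gball /= cards1.
- have [E|NE] := eqVneq (gball e x n.+1) (gball e x n).
    by right; rewrite gballS E.
  left; suff : (#|gball e x n| < #|gball e x n.+1|)%N by lia.
  apply: proper_card; rewrite properEneq eq_sym NE; exact: gball_mono.
- by right; rewrite gballS IH.
Qed.

Lemma gball_stable x n m : gball e x n.+1 = gball e x n -> (n <= m)%N ->
  gball e x m = gball e x n.
Proof.
move=> H /subnKC <-; elim: (m - n)%N => [|d IH]; first by rewrite addn0.
by rewrite addnS gballS IH -gballS.
Qed.

Lemma predlt n X : (n.-1 < X -> n <= X)%N.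
Proof. lia. Qed.

Lemma gball_full x y : y \in gball e x #|T|.-1.
Proof.
have [m Hm] := conn x y.
have [H|H] := gball_count x #|T|.-1.
  have -> : gball e x #|T|.-1 = setT.
    apply/eqP; rewrite eqEcard subsetT cardsT /=.
    exact: predlt H.
  by rewrite inE.
have [le|lt] := leqP m #|T|.-1.
  exact: subsetP (gball_mono x le) _ Hm.
by rewrite -(gball_stable H (ltnW lt)).
Qed.

Lemma gdist_le x y n : (gdist e x y <= n)%N = (y \in gball e x n).
Proof.
have T0 : (0 < #|T|)%N by apply/card_gt0P; exists x.
set P := fun n => y \in gball e x n.
have hP : has P (iota 0 #|T|).
  apply/hasP; exists #|T|.-1; last exact: gball_full.
  rewrite mem_iota; lia.
have lt : (gdist e x y < #|T|)%N by move: hP; rewrite has_find size_iota; apply.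
apply/idP/idP.
  move=> le; have := nth_find 0 hP; rewrite nth_iota // add0n => H.
  exact: subsetP (gball_mono x le) _ H.
move=> Pn; rewrite leqNgt; apply/negP=> lt2.
have := before_find 0 lt2; rewrite nth_iota ?add0n; first by rewrite /P Pn.
lia.
Qed.

Lemma gdist0 x y : (gdist e x y == 0)%N = (y == x).
Proof. by rewrite -leqn0 gdist_le /gball /= inE. Qed.

Lemma gdist_xx x : gdist e x x = 0%N.
Proof. by apply/eqP; rewrite gdist0. Qed.

Lemma gdist_edge x y z : e y z -> (gdist e x z <= (gdist e x y).+1)%N.
Proof.
move=> Hyz; rewrite gdist_le gballS in_nbhd; apply/orP; right.
by apply/existsP; exists y; rewrite -gdist_le leqnn.
Qed.

Lemma gdist_back x z m : gdist e x z = m.+1 -> exists2 y, e y z & gdist e x y = m.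
Proof.
move=> Hz.
have : z \in gball e x m.+1 by rewrite -gdist_le Hz.
rewrite gballS in_nbhd => /orP[|/existsP[y /andP[Hy Hyz]]].
  by rewrite -gdist_le Hz ltnn.
exists y => //.
move: Hy; rewrite -gdist_le => Hy.
have := gdist_edge x Hyz; lia.
Qed.
End G.

Section DR.
Variables (T : finType) (e : rel T) (D : nat) (a b c : nat -> nat).
Hypothesis H : distance_regular e D a b c.

Lemma dr_sym : symmetric e. Proof. by case: H. Qed.
Lemma dr_irr : irreflexive e. Proof. by case: H. Qed.
Lemma dr_conn : forall x y : T, exists n, y \in gball e x n. Proof. by case: H. Qed.
Lemma dr_cnt x y :
  [/\ #|[set z | e y z & (gdist e x z).+1 == gdist e x y]| = c (gdist e x y),
      #|[set z | e y z & gdist e x z == gdist e x y]| = a (gdist e x y) &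
      #|[set z | e y z & gdist e x z == (gdist e x y).+1]| = b (gdist e x y)].
Proof. by case: H => _ _ _ _; apply. Qed.

Lemma dr_Q n : (n <= D)%N -> exists x y, gdist e x y = (D - n)%N.
Proof.
case: H => _ _ _ [_ [x [y Hxy]]] _.
elim: n => [|n IH] Hn; first by exists x, y; rewrite subn0.
have [x' [z Hz]] := IH (ltnW Hn).
have Hz' : gdist e x' z = (D - n.+1).+1 by rewrite Hz; lia.
have [w _ Hw] := gdist_back dr_conn Hz'.
by exists x', w.
Qed.

Lemma dr_triple m : (m < D)%N ->
  exists x y z, [/\ e y z, gdist e x y = m & gdist e x z = m.+1].
Proof.
move=> Hm.
have [x [z Hz]] := dr_Q (n := (D - m.+1)%N) (leq_subr _ _).
have Hz' : gdist e x z = m.+1 by rewrite Hz; lia.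
have [y Hyz Hy] := gdist_back dr_conn Hz'.
by exists x, y, z.
Qed.
End DR.

Section DR2.
Variables (T : finType) (e : rel T) (D : nat) (a b c : nat -> nat).
Hypothesis H : distance_regular e D a b c.

Lemma dr_x0 : exists x : T, True.
Proof. by case: H => _ _ _ [_ [x _]] _; exists x. Qed.

Let conn := dr_conn H.
Let sym := dr_sym H.

Lemma dr_c0 : c 0 = 0%N.
Proof.
have [x _] := dr_x0.
have [Hc _ _] := dr_cnt H x x; rewrite (gdist_xx conn) in Hc; rewrite -Hc.
apply/eqP; rewrite cards_eq0; apply/eqP/setP => z; rewrite !inE.
by rewrite andbF.
Qed.

Lemma dr_a0 : a 0 = 0%N.
Proof.
have [x _] := dr_x0.
have [_ Ha _] := dr_cnt H x x; rewrite (gdist_xx conn) in Ha; rewrite -Ha.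
apply/eqP; rewrite cards_eq0; apply/eqP/setP => z; rewrite !inE.
rewrite (gdist0 conn).
by case: (z =P x) => [->|]; rewrite ?(dr_irr H) ?andbF.
Qed.

Lemma dr_deg y : b 0 = #|[set z | e y z]|.
Proof.
have [_ _ Hb] := dr_cnt H y y; rewrite (gdist_xx conn) in Hb; rewrite -Hb.
apply: eq_card => z; rewrite !inE.
case Hyz: (e y z) => //=.
have := gdist_edge conn y Hyz; rewrite (gdist_xx conn).
have : gdist e y z != 0%N.
  rewrite (gdist0 conn).
  by apply/eqP => Ez; move: Hyz; rewrite Ez (dr_irr H).
move=> ? ?; apply/eqP; lia.
Qed.

Lemma dr_sum m : (m <= D)%N -> (c m + a m + b m)%N = b 0.
Proof.
move=> Hm.
have [x [y Hxy]] := dr_Q H (n := (D - m)%N) (leq_subr _ _).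
have E : (D - (D - m))%N = m by lia.
rewrite E in Hxy; rewrite (dr_deg y) -Hxy.
have [<- <- <-] := dr_cnt H x y.
rewrite -!sum1_card !(big_mkcond (fun z => z \in _)) -!big_split /=.
apply: eq_bigr => z _; rewrite !inE.
case Hyz: (e y z) => //=.
have h1 := gdist_edge conn x Hyz.
have h2 := gdist_edge conn x (etrans (sym z y) Hyz).
by case: eqP => ?; case: eqP => ?; case: eqP => ? /=; lia.
Qed.

Lemma dr_bpos m : (m < D)%N -> (0 < b m)%N.
Proof.
move=> Hm; have [x [y [z [Hyz Hy Hz]]]] := dr_triple H Hm.
have [_ _ Hb] := dr_cnt H x y; rewrite Hy in Hb; rewrite -Hb.
by rewrite -Hy; apply/card_gt0P; exists z; rewrite inE Hyz Hz Hy eqxx.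
Qed.

Lemma dr_cpos m : (m < D)%N -> (0 < c m.+1)%N.
Proof.
move=> Hm; have [x [y [z [Hyz Hy Hz]]]] := dr_triple H Hm.
have [Hc _ _] := dr_cnt H x z; rewrite Hz in Hc; rewrite -Hc.
by rewrite -Hz; apply/card_gt0P; exists y; rewrite inE sym Hyz Hz Hy eqxx.
Qed.

Lemma dr_c1 : (0 < D)%N -> c 1 = 1%N.
Proof.
move=> Hm; have [x [y [z [Hyz Hy Hz]]]] := dr_triple H Hm.
have [Hc _ _] := dr_cnt H x z; rewrite Hz in Hc; rewrite -Hc.
rewrite -[RHS](cards1 x); apply: eq_card => w; rewrite !inE.
move/eqP: Hy; rewrite (gdist0 conn) => /eqP Eyx; subst y.
case: (w =P x) => [->|ne].
  by rewrite (gdist_xx conn) eqxx andbT sym.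
have : gdist e x w != 0%N by rewrite (gdist0 conn); apply/eqP.
by case: (gdist e x w) => // n _; rewrite andbF.
Qed.
End DR2.

Import Order.TTheory GRing.Theory Num.Theory.
Local Open Scope ring_scope.

Lemma alg_key (R : realType) (k aj bj cj A B C sjm sj sj1 sj2 rjm rj rj1 rj2 th : R) :
 sjm = - sj -> sj * sj = 1 -> k = aj + bj + cj -> k = A + B + C ->
 0 < aj -> 0 < bj -> 0 < C -> 0 <= A ->
 cj * sjm + aj * sj + bj * sj1 = - k * sj ->
 cj * rjm + aj * rj + bj * rj1 = th * rj ->
 cj * (sjm * rjm) + aj * (sj * rj) + bj * (sj1 * rj1) = - th * (sj * rj) ->
 C * sj + A * sj1 + B * sj2 = - k * sj1 ->
 C * rj + A * rj1 + B * rj2 = th * rj1 ->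
 C * (sj * rj) + A * (sj1 * rj1) + B * (sj2 * rj2) = - th * (sj1 * rj1) ->
 rj1 = rj /\ (rj <> 0 -> th = k).
Proof.
move=> Hm Hsq Hk HK ha hb hC hA Es Er Ep Fs Fr Fp.
have Ht : bj * (sj * sj1) = - (2 * aj + bj).
  have : sj * (cj * sjm + aj * sj + bj * sj1 + k * sj) = 0 by rewrite Es; ring.
  rewrite Hm Hk => H; rewrite -[RHS]addr0 -H; ring: Hsq.
have Hr : rj1 = rj.
  have H : 2 * aj * (rj - rj1) = 0.
    have -> : 2 * aj * (rj - rj1) =
      sj * ((cj * (sjm * rjm) + aj * (sj * rj) + bj * (sj1 * rj1)) - (- th * (sj * rj)))
      + ((cj * rjm + aj * rj + bj * rj1) - th * rj)
      - rj1 * sj * ((cj * sjm + aj * sj + bj * sj1) - (- k * sj)).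
      rewrite Hm Hk; ring: Hsq.
    by rewrite Ep Er Es !subrr !mulr0 !(subr0, addr0).
  move/eqP: H; rewrite mulf_eq0 subr_eq0 mulf_eq0 pnatr_eq0 /= => /orP[/eqP ha0|/eqP //].
  by move: ha; rewrite ha0 ltxx.
split=> // Hr0.
have Hw := Fs.
pose t := sj * sj1.
have HF : rj * ((B * C + A * B * t + (- k * t - C - A * t) * (th - A - C) + th * t * B)) = 0.
  have -> : rj * ((B * C + A * B * t + (- k * t - C - A * t) * (th - A - C) + th * t * B)) =
     B * (sj * ((C * (sj * rj) + A * (sj1 * rj1) + B * (sj2 * rj2)) - (- th * (sj1 * rj1))))
     - (sj * ((C * sj + A * sj1 + B * sj2) - (- k * sj1))) * (B * rj2)
     + (C + A * t + k * t) * ((C * rj + A * rj1 + B * rj2) - th * rj1).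
    rewrite /t Hr; ring: Hsq.
  by rewrite Fp Fs Fr !subrr !(mulr0, mul0r) !(subr0, addr0).
have HF2 : (B * C + A * B * t + (- k * t - C - A * t) * (th - A - C) + th * t * B) = (- t * (2 * A + C) - C) * (th - k).
  rewrite HK; ring.
move/eqP: HF; rewrite mulf_eq0 => /orP[/eqP //|/eqP].
rewrite HF2 => /eqP; rewrite mulf_eq0 => /orP[/eqP Hc|]; last by rewrite subr_eq0 => /eqP.
have : bj * (- t * (2 * A + C) - C) = 2 * aj * (2 * A + C) + 2 * bj * A.
  have -> : bj * (- t * (2 * A + C) - C) = - (bj * t) * (2 * A + C) - bj * C by ring.
  rewrite /t Ht; ring.
rewrite Hc mulr0 => H0.
have : 0 < 2 * aj * (2 * A + C) + 2 * bj * A by nra.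
by rewrite -H0 ltxx.
Qed.

Section Num.
Variables (R : realType) (D : nat) (a b c : nat -> nat).
Hypothesis HD : (4 <= D)%N.
Hypothesis c0 : c 0%N = 0%N.
Hypothesis a0 : a 0%N = 0%N.
Hypothesis a1 : a 1%N = 0%N.
Hypothesis c1 : c 1%N = 1%N.
Hypothesis Hsum : forall i, (i <= D)%N -> (c i + a i + b i)%N = b 0%N.
Hypothesis Hb : forall i, (i < D)%N -> (0 < b i)%N.
Hypothesis Hc : forall i, (i < D)%N -> (0 < c i.+1)%N.
Hypothesis Hj : exists i : nat, (2 <= i <= D - 2)%N /\ a i <> 0%N.

Fixpoint pcp (th : R) (n : nat) : R * R :=
  match n with
  | 0 => (1, (th - (c 0)%:R - (a 0)%:R) / (b 0)%:R)
  | m.+1 => let p := pcp th m in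
      (p.2, (th * p.2 - (c m.+1)%:R * p.1 - (a m.+1)%:R * p.2) / (b m.+1)%:R)
  end.

Lemma bnz i : (i < D)%N -> (b i)%:R != 0 :> R.
Proof. by move=> Hi; rewrite pnatr_eq0 -lt0n Hb. Qed.

Lemma pc_exists th : pseudo_cosine D a b c th (fun n => (pcp th n).1).
Proof.
split => // -[|i] Hi /=.
  by have bz := bnz Hi; field.
by have bz := bnz Hi; field.
Qed.

Lemma part1 (th : R) : tight_pair D a b c th (b 0)%:R.
Proof.
exists (fun n => (pcp th n).1), (fun _ => 1), th; split.
- exact: pc_exists.
- split => // i Hi; rewrite !mulr1 -!natrD Hsum //; exact: ltnW.
- have [h0 h] := pc_exists th; split; first by rewrite /= mulr1.
  by move=> i Hi; rewrite /= !mulr1; exact: h.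
Qed.

Lemma neg_case (th th' eta : R) (s r : nat -> R) :
  pseudo_cosine D a b c th s -> pseudo_cosine D a b c th' r ->
  pseudo_cosine D a b c eta (fun i => s i * r i) -> s 1%N = -1 ->
  th' = (b 0)%:R.
Proof.
move=> [s0 Es] [r0 Er] [_ Ep] s1.
set k := (b 0)%:R.
have D0 : (0 < D)%N by lia.
have E0s := Es 0%N D0; have E0r := Er 0%N D0; have E0p := Ep 0%N D0.
rewrite /= c0 a0 s0 s1 in E0s; rewrite /= c0 a0 r0 in E0r;
  rewrite /= c0 a0 s0 s1 r0 in E0p.
have Hth : th = - k by rewrite -[th]mulr1 -E0s; ring.
have Heta : eta = - th'.
  have -> : eta = eta * (1 * 1) by ring.
  rewrite -E0p -[th']mulr1 -E0r; ring.
have exj : exists i, a i != 0%N by case: Hj => i [_ /eqP]; exists i.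
case: (ex_minnP exj) => j Haj Hmin.
have jle : (j <= D - 2)%N by case: Hj => i [Hi /eqP /Hmin]; lia.
have j2 : (2 <= j)%N.
  case: j Haj {Hmin jle} => [|[|j]] //; by rewrite ?a0 ?a1.
have sign : forall i, (i.+1 <= j)%N -> s i = (-1) ^+ i /\ s i.+1 = (-1) ^+ i.+1.
  elim => [|i IH] Hi; first by rewrite s0 s1 expr0 expr1.
  have [IH1 IH2] := IH (ltnW Hi); split => //.
  have Ha : a i.+1 = 0%N.
    by case: (eqVneq (a i.+1) 0%N) => // /Hmin; lia.
  have Hs := Hsum (i := i.+1) (ltac:(lia)).
  rewrite Ha addn0 in Hs.
  have E := Es i.+1 (ltac:(lia)); rewrite /= IH1 IH2 Ha Hth in E.
  have bz := bnz (i := i.+1) (ltac:(lia)).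
  apply: (mulfI bz).
  have -> : (b i.+1)%:R * s i.+2 = (c i.+1)%:R * (-1) ^+ i + (0%N)%:R * (-1) ^+ i.+1 +
     (b i.+1)%:R * s i.+2 - (c i.+1)%:R * (-1) ^+ i by ring.
  rewrite E /k -Hs natrD !exprS; ring.
case: j Haj Hmin jle j2 sign => [|j'] // Haj Hmin jle j2 sign.
have [Hsj' Hsj] := sign j' (leqnn _).
have Hsum1 := Hsum (i := j'.+1) (ltac:(lia)).
have Hsum2 := Hsum (i := j'.+2) (ltac:(lia)).
have key := @alg_key R k (a j'.+1)%:R (b j'.+1)%:R (c j'.+1)%:R
  (a j'.+2)%:R (b j'.+2)%:R (c j'.+2)%:R (s j') (s j'.+1) (s j'.+2) (s j'.+3)
  (r j') (r j'.+1) (r j'.+2) (r j'.+3) th'.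
have [Hr Hnz] : r j'.+2 = r j'.+1 /\ (r j'.+1 <> 0 -> th' = k).
  apply: key.
  - by rewrite Hsj Hsj' exprS mulN1r opprK.
  - by rewrite Hsj -exprMn mulrNN mulr1 expr1n.
  - by rewrite /k -Hsum1 !natrD; ring.
  - by rewrite /k -Hsum2 !natrD; ring.
  - by rewrite ltr0n lt0n.
  - by rewrite ltr0n; apply: Hb; lia.
  - by rewrite ltr0n; apply: Hc; lia.
  - exact: ler0n.
  - by have := Es j'.+1 (ltac:(lia)); rewrite /= Hth.
  - exact: Er j'.+1 (ltac:(lia)).
  - by have := Ep j'.+1 (ltac:(lia)); rewrite /= Heta.
  - by have := Es j'.+2 (ltac:(lia)); rewrite /= Hth.
  - exact: Er j'.+2 (ltac:(lia)).
  - by have := Ep j'.+2 (ltac:(lia)); rewrite /= Heta.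
case: (eqVneq (r j'.+1) 0) => [Hz|/eqP Hnz']; last exact: Hnz.
exfalso.
have zero : forall n, (n <= j'.+1)%N -> r (j'.+1 - n)%N = 0 /\ r (j'.+1 - n)%N.+1 = 0.
  elim => [|n IH] Hn; first by rewrite subn0 Hr Hz.
  have [IH1 IH2] := IH (ltnW Hn).
  have Em : (j'.+1 - n = (j'.+1 - n.+1).+1)%N by lia.
  rewrite Em in IH1 IH2.
  set m := (j'.+1 - n.+1)%N in IH1 IH2 *.
  split => //.
  have E := Er m.+1 (ltac:(lia)); rewrite /= IH1 IH2 !mulr0 !addr0 in E.
  move/eqP: E; rewrite mulf_eq0 pnatr_eq0 => /orP[|/eqP //].
  move=> /eqP Hc0; have := Hc (i := m); rewrite Hc0; lia.
have [Hr0 _] := zero j'.+1 (leqnn _).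
by move: Hr0; rewrite subnn r0 => /eqP; rewrite oner_eq0.
Qed.

Lemma part2 (th th' : R) : tight_pair D a b c th th' ->
  th = (b 0)%:R \/ th' = (b 0)%:R.
Proof.
move=> [s [r [eta [Ps Pr Pp]]]].
have Pp' : pseudo_cosine D a b c eta (fun i => r i * s i).
  case: Pp => h0 h; split; first by rewrite mulrC.
  by move=> i Hi; rewrite ![r _ * s _]mulrC; exact: h.
move: (Ps) (Pr) (Pp) => [s0 Es] [r0 Er] [_ Ep].
set k := (b 0)%:R.
have D0 : (0 < D)%N by lia.
have D1 : (1 < D)%N by lia.
have E0s := Es 0%N D0; have E0r := Er 0%N D0; have E0p := Ep 0%N D0.
rewrite /= c0 a0 s0 in E0s; rewrite /= c0 a0 r0 in E0r;
  rewrite /= c0 a0 s0 r0 in E0p.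
have E1s := Es 1%N D1; have E1r := Er 1%N D1; have E1p := Ep 1%N D1.
rewrite /= c1 a1 s0 in E1s; rewrite /= c1 a1 r0 in E1r;
  rewrite /= c1 a1 s0 r0 in E1p.
have Hth : th = k * s 1%N by rewrite -[th]mulr1 -E0s; ring.
have Hth' : th' = k * r 1%N by rewrite -[th']mulr1 -E0r; ring.
have Heta : eta = k * (s 1%N * r 1%N).
  have -> : eta = eta * (1 * 1) by ring.
  rewrite -E0p; ring.
have Hb1 : (b 1)%:R = k - 1.
  have := Hsum (i := 1%N) (ltac:(lia)); rewrite c1 a1 /k => <-.
  rewrite !natrD; ring.
have e1 : (b 1)%:R * s 2%N = th * s 1%N - 1 by rewrite -E1s; ring.
have e2 : (b 1)%:R * r 2%N = th' * r 1%N - 1 by rewrite -E1r; ring.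
have e3 : (b 1)%:R * (s 2%N * r 2%N) = eta * (s 1%N * r 1%N) - 1 by rewrite -E1p; ring.
have e4 : (th * s 1%N - 1) * (th' * r 1%N - 1) = (b 1)%:R * (eta * (s 1%N * r 1%N) - 1).
  by rewrite -e1 -e2 -e3; ring.
rewrite Hth Hth' Heta Hb1 in e4.
have e5 : k * ((1 - s 1%N) * (1 + s 1%N)) * ((1 - r 1%N) * (1 + r 1%N)) = 0.
  have -> : k * ((1 - s 1%N) * (1 + s 1%N)) * ((1 - r 1%N) * (1 + r 1%N)) =
    (k * s 1%N * s 1%N - 1) * (k * r 1%N * r 1%N - 1) - (k - 1) * (k * (s 1%N * r 1%N) * (s 1%N * r 1%N) - 1) by ring.
  by rewrite e4 subrr.
have kz : k != 0 by exact: bnz.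
move/eqP: e5; rewrite !mulf_eq0 (negbTE kz) /= !subr_eq0 !addr_eq0.
case/orP => [/orP[/eqP H|H]|/orP[/eqP H|H]].
- by left; rewrite Hth -H mulr1.
- by right; apply: (neg_case Ps Pr Pp); rewrite -[s 1%N]opprK -(eqP H).
- by right; rewrite Hth' -H mulr1.
- by left; apply: (neg_case Pr Ps Pp'); rewrite -[r 1%N]opprK -(eqP H).
Qed.

End Num.

Unset Implicit Arguments.

Theorem theorem10p1 (R : realType) (T : finType) (e : rel T) (D : nat)
    (a b c : nat -> nat) :
  distance_regular e D a b c ->
  (4 <= D)%N ->
  a 1%N = 0%N ->
  (exists i : nat, (2 <= i <= D - 2)%N /\ a i <> 0%N) ->
  (forall theta : R, tight_pair D a b c theta (b 0%N)%:R) /\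
  (forall theta theta' : R, tight_pair D a b c theta theta' ->
     theta = (b 0%N)%:R \/ theta' = (b 0%N)%:R).
Proof.
move=> H HD a1 Hj.
have c0 := dr_c0 H.
have a0 := dr_a0 H.
have c1 := dr_c1 H (ltac:(lia)).
have Hsum := dr_sum H.
have Hb := dr_bpos H.
have Hc := dr_cpos H.
split.
- by move=> th; apply: (part1 Hsum Hb).
- by move=> th th'; apply: (part2 HD c0 a0 a1 c1 Hsum Hb Hc Hj).
Qed.
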